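(* Let $x_1,\dots,x_n\in\mathbb{R}^p$, $\epsilon>0$, $k(x,x')=\exp(-\|x-x'\|^2/(4\epsilon^2))$, $\bar K_{ij}=k(x_i,x_j)$, $\bar A_{ij}=k(x_i,x_j)/(\bar K_{i\cdot}\bar K_{\cdot j})$, $\bar Z_{ij}=\bar A_{ij}/\bar A_{i\cdot}$ for $1\le i,j\le n$, and $\bar\Lambda=\mathrm{diag}(\bar Z_{\cdot1},\dots,\bar Z_{\cdot n})$. Let $\gamma_n=\sup_{1\le i,j\le n}\bar A_{i\cdot}/\bar A_{j\cdot}-1$. Then $\|\bar Z-\bar\Lambda^{-1}\bar Z^\top\|_2\le\sqrt2\,\gamma_n$.
   Context: $B_{i\cdot}=\sum_jB_{ij}$, $B_{\cdot j}=\sum_iB_{ij}$; $\|\cdot\|_2$ is the spectral norm. *)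

(* Defs.v *)
From HB Require Import structures.
From mathcomp Require Import all_boot all_order all_algebra.
From mathcomp Require Import all_classical all_reals all_analysis.
Set Implicit Arguments. Unset Strict Implicit. Unset Printing Implicit Defensive.
Import Order.TTheory GRing.Theory Num.Theory.
Local Open Scope ring_scope.
Local Open Scope classical_set_scope.

Definition vnorm2 (R : realType) (n : nat) (v : 'cV[R]_n) : R :=
  Num.sqrt (\sum_(i < n) v i 0 ^+ 2).

Definition specnorm (R : realType) (m n : nat) (A : 'M[R]_(m, n)) : R :=
  sup [set r : R | exists v : 'cV[R]_n, vnorm2 v <= 1 /\ r = vnorm2 (A *m v)].

Definition sqdist (R : realType) (p : nat) (x y : 'rV[R]_p) : R :=
  \sum_(k < p) (x 0 k - y 0 k) ^+ 2.

Definition gkern (R : realType) (p : nat) (eps : R) (x y : 'rV[R]_p) : R :=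
  expR (- sqdist x y / (4 * eps ^+ 2)).

Section Mats.
Variables (R : realType) (n p : nat) (eps : R) (x : 'I_n -> 'rV[R]_p).

Definition Kbar : 'M[R]_n := \matrix_(i, j) gkern eps (x i) (x j).
Definition rsum (M : 'M[R]_n) (i : 'I_n) : R := \sum_(j < n) M i j.
Definition csum (M : 'M[R]_n) (j : 'I_n) : R := \sum_(i < n) M i j.
Definition Abar : 'M[R]_n :=
  \matrix_(i, j) (Kbar i j / (rsum Kbar i * csum Kbar j)).
Definition Zbar : 'M[R]_n := \matrix_(i, j) (Abar i j / rsum Abar i).
Definition Lambdabar : 'M[R]_n := diag_mx (\row_j csum Zbar j).
(* gamma_n = max_{i,j} A_{i.}/A_{j.} - 1 (finite sup = max; ratios are > 0). *)
Definition gamma_n : R :=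
  \big[Num.max/0]_(i < n) \big[Num.max/0]_(j < n) (rsum Abar i / rsum Abar j) - 1.
End Mats.

(* Main.v *)
Require Import Defs.
From HB Require Import structures.
From mathcomp Require Import all_boot all_order all_algebra.
From mathcomp Require Import all_classical all_reals all_analysis.
From mathcomp Require Import ring lra.
Import Order.TTheory GRing.Theory Num.Theory.
Local Open Scope ring_scope.

Lemma term_bd (R : realType) (d b w v g : R) : 0 < g -> `|d| <= b ->
  2 * g * (d * w * v) <= b * (w ^+ 2 + g ^+ 2 * v ^+ 2).
Proof.
move=> g0 db.
have b0 : 0 <= b by apply: le_trans db.
have h1 : d * w * v <= b * (`|w| * `|v|).
  apply: le_trans (ler_norm _) _; rewrite -mulrA normrM normrM.
  by apply: ler_wpM2r => //; rewrite mulr_ge0.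
have h2 : 2 * g * (`|w| * `|v|) <= w ^+ 2 + g ^+ 2 * v ^+ 2.
  have := sqr_ge0 (`|w| - g * `|v|).
  rewrite -(real_normK (num_real w)) -(real_normK (num_real v)).
  move=> H; nra.
have := ler_wpM2l b0 h2.
have : 2 * g * (d * w * v) <= 2 * g * (b * (`|w| * `|v|)).
  by apply: ler_wpM2l => //; nra.
nra.
Qed.

Lemma schur (R : realType) n (D B : 'M[R]_n) (g : R) (v : 'cV[R]_n) :
  0 <= g -> (forall i j, `|D i j| <= B i j) ->
  (forall i, \sum_j B i j <= g) -> (forall j, \sum_i B i j <= g) ->
  \sum_i ((D *m v) i 0) ^+ 2 <= g ^+ 2 * \sum_i (v i 0) ^+ 2.
Proof.
move=> g0 DB Br Bc.
have B0 : forall i j, 0 <= B i j by move=> i j; exact: le_trans (normr_ge0 (D i j)) (DB i j).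
have [g00|gp] := eqVneq g 0; first subst g.
  have Dz : forall i j, D i j = 0.
    move=> i j; apply/eqP; rewrite -normr_le0; apply: (le_trans (DB i j)).
    apply: le_trans _ (Br i); rewrite (bigD1 j) //= lerDl; exact: sumr_ge0.
  rewrite expr0n /= mul0r le_eqVlt; apply/orP; left; apply/eqP.
  apply: big1 => i _; rewrite mxE big1 ?expr0n // => j _; by rewrite Dz mul0r.
have gp' : 0 < g by rewrite lt_def gp g0.
set W := \sum_i _.
set V := \sum_i _.
have eW : W = \sum_i \sum_j (D i j * (D *m v) i 0 * v j 0).
  apply: eq_bigr => i _; rewrite expr2 {1}mxE mulr_suml; apply: eq_bigr => j _.
  by rewrite mulrAC.
have h : 2 * g * W <= g * W + g ^+ 3 * V.
  rewrite [in X in X <= _]eW mulr_sumr.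
  apply: (@le_trans _ _ (\sum_i \sum_j B i j * (((D *m v) i 0) ^+ 2 + g ^+ 2 * (v j 0) ^+ 2))).
    apply: ler_sum => i _; rewrite mulr_sumr; apply: ler_sum => j _; exact: term_bd.
  have -> : \sum_i \sum_j B i j * (((D *m v) i 0) ^+ 2 + g ^+ 2 * (v j 0) ^+ 2) =
    \sum_i \sum_j B i j * ((D *m v) i 0) ^+ 2 + \sum_i \sum_j B i j * (g ^+ 2 * (v j 0) ^+ 2).
    by rewrite -big_split; apply: eq_bigr => i _; rewrite -big_split; apply: eq_bigr => j _; rewrite mulrDr.
  apply: lerD.
    rewrite /W mulr_sumr; apply: ler_sum => i _. rewrite -mulr_suml; apply: ler_wpM2r; [exact: sqr_ge0|exact: Br].
  rewrite exchange_big /V mulr_sumr /=; apply: ler_sum => j _.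
  under eq_bigr do rewrite mulrCA.
  rewrite -mulr_sumr -mulr_suml.
  apply: (@le_trans _ _ (g ^+ 2 * (g * v j 0 ^+ 2))).
    by apply: ler_wpM2l; [exact: sqr_ge0|apply: ler_wpM2r; [exact: sqr_ge0|exact: Bc]].
  by rewrite mulrA -exprSr.
have : g * W <= g * (g ^+ 2 * V) by rewrite exprSr in h; nra.
by rewrite ler_pM2l.
Qed.
Lemma exists_min (R : realType) n (hn : (0<n)%N) (f : 'I_n -> R) :
  exists i0, forall k, f i0 <= f k.
Proof.
case: (@arg_minP _ R 'I_n (Ordinal hn) xpredT f erefl) => i _ H.
by exists i => k; apply: H.
Qed.

Theorem lemma4 (R : realType) (n p : nat) (x : 'I_n -> 'rV[R]_p) (eps : R)
  (hn : (0 < n)%N) (heps : 0 < eps) :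
  specnorm (Zbar eps x - invmx (Lambdabar eps x) *m (Zbar eps x)^T)
    <= Num.sqrt 2 * gamma_n eps x.
Proof.
have sumpos : forall (f : 'I_n -> R), (forall i, 0 < f i) -> 0 < \sum_i f i.
  move=> f fp; rewrite (bigD1 (Ordinal hn)) //=; apply: ltr_wpDr => //.
  by apply: sumr_ge0 => i _; exact: ltW.
pose K := Kbar eps x.
have Kpos : forall i j, 0 < K i j by move=> i j; rewrite /K /Kbar mxE /gkern expR_gt0.
have Ksym : forall i j, K i j = K j i.
  move=> i j; rewrite /K /Kbar !mxE /gkern.
  have -> : sqdist (x i) (x j) = sqdist (x j) (x i).
    by apply: eq_bigr => k _; rewrite -sqrrN opprB.
  by [].
have rK : forall i, csum K i = rsum K i by move=> i; apply: eq_bigr => j _; rewrite Ksym.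
have rKp : forall i, 0 < rsum K i by move=> i; apply: sumpos => j; exact: Kpos.
pose A := Abar eps x.
have Ae : forall i j, A i j = K i j / (rsum K i * rsum K j).
  by move=> i j; rewrite /A /Abar mxE rK.
have Apos : forall i j, 0 < A i j by move=> i j; rewrite Ae divr_gt0 // mulr_gt0.
have Asym : forall i j, A i j = A j i by move=> i j; rewrite !Ae Ksym [rsum K i * _]mulrC.
pose a := rsum A.
have ap : forall i, 0 < a i by move=> i; apply: sumpos => j; exact: Apos.
pose Z := Zbar eps x.
have Ze : forall i j, Z i j = A i j / a i by move=> i j; rewrite /Z /Zbar mxE.
pose L := csum Z.
have Le : forall i, L i = \sum_k A i k / a k.
  by move=> i; apply: eq_bigr => k _; rewrite Ze Asym.
have Lp : forall i, 0 < L i.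
  by move=> i; rewrite Le; apply: sumpos => k; rewrite divr_gt0.
have invL : invmx (Lambdabar eps x) = diag_mx (\row_j (L j)^-1).
  have H : Lambdabar eps x *m diag_mx (\row_j (L j)^-1) = 1%:M.
    rewrite /Lambdabar mulmx_diag; apply/matrixP => i j; rewrite !mxE.
    by rewrite mulfV ?(gt_eqF (Lp i)).
  have [U _] := mulmx1_unit H.
  by rewrite -[RHS]mul1mx -(mulVmx U) -mulmxA H mulmx1.
pose D := Zbar eps x - invmx (Lambdabar eps x) *m (Zbar eps x)^T.
have De : forall i j, D i j = A i j / a i - (L i)^-1 * (A i j / a j).
  by move=> i j; rewrite /D invL mul_diag_mx; change (Zbar eps x) with Z; clearbody L Z a A; rewrite !mxE Ze Ze [A j i]Asym.
pose gam := gamma_n eps x.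
have rat : forall i j, a i / a j <= gam + 1.
  move=> i j; rewrite /gam /gamma_n subrK.
  apply: le_trans (le_bigmax _ _ i).
  exact: (le_bigmax _ (fun j => rsum (Abar eps x) i / rsum (Abar eps x) j) j).
have aE : forall i, a i = \sum_k A i k by [].
change (gamma_n eps x) with gam.
clearbody gam K A a Z L.
have gam0 : 0 <= gam.
  have := rat (Ordinal hn) (Ordinal hn); rewrite divff ?(gt_eqF (ap _)) //.
  by rewrite lerDr.
have [i0 mle] := @exists_min _ _ hn a.
set m := a i0.
have mp : 0 < m by exact: ap.
have leM : forall k, a k <= (gam + 1) * m.
  by move=> k; rewrite -ler_pdivrMr //; exact: rat.
have L1 : forall i, m * L i <= a i.
  move=> i; rewrite Le mulr_sumr [leRHS]aE; apply: ler_sum => k _.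
  rewrite mulrCA -[leRHS]mulr1; apply: ler_wpM2l; first exact: ltW.
  by rewrite ler_pdivrMr // mul1r.
have L2 : forall i, a i <= (gam + 1) * m * L i.
  move=> i; rewrite Le mulr_sumr [leLHS]aE; apply: ler_sum => k _.
  rewrite mulrCA -{1}[A i k]mulr1; apply: ler_wpM2l; first exact: ltW.
  by rewrite ler_pdivlMr // mul1r.
pose B : 'M[R]_n := \matrix_(i, j) (gam * m * (A i j / (a i * a j))).
have DB : forall i j, `|D i j| <= B i j.
  move=> i j; rewrite De mxE.
  have aip := ap i; have ajp := ap j; have Lip := Lp i.
  have -> : A i j / a i - (L i)^-1 * (A i j / a j) =
            (A i j / (a i * a j)) * ((a j * L i - a i) / L i).
    by field; rewrite !gt_eqF.
  rewrite normrM (gtr0_norm (divr_gt0 (Apos i j) (mulr_gt0 aip ajp))) mulrC.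
  apply: ler_wpM2r; first by apply: ltW; rewrite divr_gt0 // mulr_gt0.
  rewrite normrM normfV (gtr0_norm Lip) ler_pdivrMr //.
  have h1 := L1 i; have h2 := L2 i; have h3 := leM j; have h4 := mle j.
  have h5 : a j * L i <= (gam + 1) * m * L i by apply: ler_wpM2r => //; exact: ltW.
  have h6 : m * L i <= a j * L i by apply: ler_wpM2r => //; exact: ltW.
  rewrite ler_norml; apply/andP; split; nra.
have Brow : forall i, \sum_j B i j <= gam.
  move=> i.
  apply: (@le_trans _ _ (\sum_j gam * (A i j / a i))).
    apply: ler_sum => j _; rewrite mxE -mulrA; apply: ler_wpM2l => //.
    have aip := ap i; have ajp := ap j.
    have -> : m * (A i j / (a i * a j)) = (A i j / a i) * (m / a j).
      by field; rewrite !gt_eqF.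
    rewrite -[leRHS]mulr1; apply: ler_wpM2l; first by apply: ltW; rewrite divr_gt0.
    by rewrite ler_pdivrMr // mul1r.
  rewrite -mulr_sumr -mulr_suml -aE divff ?mulr1 //; by rewrite gt_eqF ?ap.
have Bsym : forall i j, B i j = B j i by move=> i j; rewrite !mxE Asym [a i * _]mulrC.
have Bcol : forall j, \sum_i B i j <= gam.
  by move=> j; under eq_bigr do rewrite Bsym; exact: Brow.
rewrite /specnorm; apply: ge_sup.
  exists (vnorm2 (D *m 0)), 0; split => //.
  by rewrite /vnorm2 big1 ?sqrtr0 // => i _; rewrite mxE expr0n.
move=> r [v [hv ->]].
have S := @schur _ _ D B gam v gam0 DB Brow Bcol.
apply: (@le_trans _ _ (gam * vnorm2 v)).
  rewrite /vnorm2 -(ger0_norm gam0) -sqrtr_sqr -sqrtrM ?sqr_ge0 //.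
  exact: ler_wsqrtr.
have s2 : 1 <= Num.sqrt (2 : R).
  by rewrite -{1}sqrtr1; apply: ler_wsqrtr; lra.
rewrite [leRHS]mulrC; apply: ler_wpM2l => //; exact: le_trans hv s2.
Qed.
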